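(* Let $n\ge 1$ and $\ell\ge 0$ be integers. Let $\mathbf{M}_0,\mathbf{M}_1,\ldots,\mathbf{M}_\ell$ be $n\times n$ matrices with entries in $\{0,1\}$, let $\pi_{0,0}=1$, and let $\pi_{1,0},\ldots,\pi_{\ell,0}$ be real numbers with $0<\pi_{k,0}\le 1$ for $1\le k\le \ell$. Define $n\times n$ matrices $\mathbf{Q}_0,\ldots,\mathbf{Q}_\ell$ recursively by $$\mathbf{Q}_0=\mathbf{M}_0,\qquad \mathbf{Q}_k=\mathbf{Q}_{k-1}+\pi_{k,0}\big((\mathbf{J}^{(n)}-\mathbf{Q}_{k-1})\circ \mathbf{M}_k\big)\quad (k=1,\ldots,\ell),$$ where $\mathbf{J}^{(n)}$ is the $n\times n$ all-ones matrix and $\circ$ denotes the Hadamard (entrywise) product. Then for all $1\le i,j\le n$: (a) $0\le \mathbf{Q}_k(i,j)\le 1$ for all $0\le k\le \ell$; (b) $\mathbf{Q}_k(i,j)\ge \mathbf{Q}_{k-1}(i,j)$ for all $1\le k\le \ell$; (c) $\mathbf{Q}_\ell(i,j)=0$ if and only if $\mathbf{M}_k(i,j)=0$ for all $0\le k\le \ell$; (d) $\mathbf{Q}_\ell(i,j)=1$ if and only if there exists $k$ with $0\le k\le \ell$ such that $\mathbf{M}_k(i,j)=1$ and $\pi_{k,0}=1$; in particular, if $\mathbf{M}_0(i,j)=1$ then $\mathbf{Q}_\ell(i,j)=1$.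
   Context: Interpretation (not needed for the statement): there are $n$ users of a social network and skills $s_0,\ldots,s_\ell$, with $s_0$ the main skill; $\mathbf{M}_k$ is the adjacency matrix of the endorsement digraph for skill $s_k$ ($\mathbf{M}_k(i,j)=1$ iff user $i$ endorses user $j$ for $s_k$), and $\pi_{k,0}$ is the probability that a person skilled in $s_k$ also possesses $s_0$ (entries of the skill deduction matrix, with $\pi_{k,k}=1$). The skills $s_1,\ldots,s_\ell$ are exactly those other skills with $\pi_{k,0}>0$. $\mathbf{Q}_\ell$ is the weighted endorsement matrix for $s_0$ after endorsement deduction. *)

(* Defs.v *)
From mathcomp Require Import all_boot all_order all_algebra.
From mathcomp Require Import reals.
Set Implicit Arguments. Unset Strict Implicit. Unset Printing Implicit Defensive.
Import GRing.Theory Num.Theory.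
Local Open Scope ring_scope.

Definition hadamard (R : pzRingType) (m n : nat) (A B : 'M[R]_(m, n)) : 'M[R]_(m, n) :=
  map2_mx *%R A B.

Fixpoint Qmx (R : pzRingType) (n : nat) (M : nat -> 'M[R]_n) (pi : nat -> R)
    (k : nat) : 'M[R]_n :=
  match k with
  | 0 => M 0%N
  | k'.+1 => Qmx M pi k' + pi k'.+1 *: hadamard (const_mx 1 - Qmx M pi k') (M k'.+1)
  end.

(* Main.v *)
Require Import Defs.
From mathcomp Require Import all_boot all_order all_algebra.
From mathcomp Require Import reals.
From mathcomp Require Import ring lra.
Import GRing.Theory Num.Theory.
Local Open Scope ring_scope.

Lemma Qstep (R : realType) (n : nat) (M : nat -> 'M[R]_n) (pi : nat -> R) k (i j : 'I_n) :
  Qmx M pi k.+1 i j = Qmx M pi k i j + pi k.+1 * ((1 - Qmx M pi k i j) * M k.+1 i j).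
Proof. by rewrite /= /hadamard !mxE. Qed.

Theorem proposition1 (R : realType) (n l : nat) (M : nat -> 'M[R]_n) (pi : nat -> R) :
  (1 <= n)%N ->
  (forall k, (k <= l)%N -> forall i j, M k i j = 0 \/ M k i j = 1) ->
  pi 0%N = 1 ->
  (forall k, (1 <= k <= l)%N -> 0 < pi k /\ pi k <= 1) ->
  forall i j : 'I_n,
    (forall k, (k <= l)%N -> 0 <= Qmx M pi k i j /\ Qmx M pi k i j <= 1) /\
    (forall k, (1 <= k <= l)%N -> Qmx M pi k.-1 i j <= Qmx M pi k i j) /\
    (Qmx M pi l i j = 0 <-> (forall k, (k <= l)%N -> M k i j = 0)) /\
    (Qmx M pi l i j = 1 <-> (exists k, (k <= l)%N /\ M k i j = 1 /\ pi k = 1)) /\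
    (M 0%N i j = 1 -> Qmx M pi l i j = 1).
Proof.
move=> _ HM Hpi0 Hpi i j.
have key : forall k, (k <= l)%N ->
  [/\ 0 <= Qmx M pi k i j /\ Qmx M pi k i j <= 1,
      Qmx M pi k i j = 0 <-> (forall k', (k' <= k)%N -> M k' i j = 0) &
      Qmx M pi k i j = 1 <-> (exists k', (k' <= k)%N /\ M k' i j = 1 /\ pi k' = 1)].
  elim=> [|k IH] Hk.
    have := HM 0%N Hk i j; rewrite /= => -[Hm|Hm]; rewrite Hm.
      split; first by lra.
        by split=> // _ k'; rewrite leqn0 => /eqP ->.
      split=> [/eqP|[k' [Hk' [H1 _]]]]; first by rewrite eq_sym oner_eq0.
      by move: Hk'; rewrite leqn0 => /eqP E; rewrite E Hm in H1; move: H1 => /eqP; rewrite eq_sym oner_eq0.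
    split; first by lra.
      split=> [/eqP|H]; first by rewrite oner_eq0.
      by have := H 0%N (leq0n _); rewrite Hm; move/eqP; rewrite oner_eq0.
    by split=> // _; exists 0%N.
  have Hk' : (k <= l)%N by apply: ltnW.
  have [[q0 q1] [Z1 Z2] [O1 O2]] := IH Hk'.
  have [p0 p1] := Hpi k.+1 Hk.
  rewrite Qstep.
  set q := Qmx M pi k i j in q0 q1 Z1 Z2 O1 O2 *.
  have := HM k.+1 Hk i j => -[Hm|Hm]; rewrite Hm.
    rewrite !mulr0 addr0; split => //.
      split=> [/Z1 H k2|H]; last by apply: Z2 => k2 Hk2; apply: H; apply: leqW.
      by rewrite leq_eqVlt ltnS => /orP[/eqP->|]; [|apply: H].
    split=> [/O1 [k2 [? ?]]|[k2 [Hk2 [H1 H2]]]].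
      by exists k2; split=> //; apply: leqW.
    apply: O2; exists k2; split=> //.
    move: Hk2; rewrite leq_eqVlt ltnS => /orP[/eqP E|//].
    by move: H1; rewrite E Hm => /eqP; rewrite eq_sym oner_eq0.
  rewrite mulr1; split; first by nra.
    split=> [E|H]; last by have := H k.+1 (leqnn _); rewrite Hm => /eqP; rewrite oner_eq0.
    exfalso; have h1 : 0 <= pi k.+1 * (1 - q) by apply: mulr_ge0; lra.
    have hq : q = 0 by lra.
    by move: E; rewrite hq subr0 mulr1 add0r; lra.
  split=> [E|[k2 [Hk2 [H1 H2]]]].
    have E' : (1 - q) * (1 - pi k.+1) = 0.
      have -> : (1 - q) * (1 - pi k.+1) = 1 - (q + pi k.+1 * (1 - q)) by ring.
      by rewrite E subrr.
    move/eqP: E'; rewrite mulf_eq0 => /orP[/eqP E1|/eqP E1].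
      have [k2 [? ?]] : exists k', (k' <= k)%N /\ M k' i j = 1 /\ pi k' = 1 by apply: O1; lra.
      by exists k2; split=> //; apply: leqW.
    by exists k.+1; split=> //; split=> //; lra.
  move: Hk2; rewrite leq_eqVlt ltnS => /orP[/eqP E|Hk2].
    rewrite E in H2; rewrite H2; ring.
  have -> : q = 1 by apply: O2; exists k2.
  ring.
have [A B C] : [/\ 0 <= Qmx M pi l i j /\ Qmx M pi l i j <= 1,
      Qmx M pi l i j = 0 <-> (forall k', (k' <= l)%N -> M k' i j = 0) &
      Qmx M pi l i j = 1 <-> (exists k', (k' <= l)%N /\ M k' i j = 1 /\ pi k' = 1)]
  by apply: key.
split; first by move=> k /key [].
split.
  case=> [//|k] /andP[_ Hk]; rewrite /= Qstep.
  have [[q0 q1] _ _] := key k (ltnW Hk).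
  have [p0 p1] := Hpi k.+1 Hk.
  have := HM k.+1 Hk i j => -[->|->]; nra.
split=> //; split=> // H0.
by apply C.2; exists 0%N.
Qed.
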